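(* Let $P$ be a program. $[\![P]\!]_{\mathrm{GC}}$ is pointer-race-free if and only if there is no computation $\sigma_1.\mathit{act}_1.\sigma_2.\mathit{act}_2\in[\![P]\!]_{\mathrm{GC}}$ satisfying all of the following: - the command of $\mathit{act}_1$ is $\mathtt{free}(x)$ with $h_{\sigma_1}(x)=a\neq\mathtt{seg}$; - the command of $\mathit{act}_2$ accesses $y.\mathtt{next}$ or $y.\mathtt{data}$, or is $\mathtt{free}(y)$, or is an assertion mentioning $y$, for some pointer variable $y$; - $h_{\sigma_1.\mathit{act}_1.\sigma_2}(y)=a$.
   Context: Programs. Programs are sets of threads (while-programs) over pointer variables $\mathit{PVar}$ and data variables $\mathit{DVar}$. The commands are: - $\mathtt{assert}\ c$, with $c::=x=y\mid u=v\mid\neg c$ and complementary asserts at each location; - $x:=\mathtt{malloc}$; - $\mathtt{free}(x)$; - $y:=x.\mathtt{next}$, $x.\mathtt{next}:=y$, $x:=y$; - $u:=x.\mathtt{data}$, $x.\mathtt{data}:=u$; - $u:=\mathit{op}(\dots)$. Heaps. A heap is $h=(\mathit{pval},\mathit{dval})$ with partial maps from $\mathit{PExp}=\mathit{PVar}\cup\{a.\mathtt{next}_i\}$ to $\mathit{Adr}\ni\mathtt{seg}$, and from $\mathit{DExp}=\mathit{DVar}\cup\{a.\mathtt{data}\}$ to data. $h_\sigma$ is the heap after $\sigma$ and $\mathrm{adr}(h)$ the set of addresses occurring in $h$. Garbage-collected semantics $[\![P]\!]_{\mathrm{GC}}$. Initially pointer variables are $\mathtt{seg}$. The rules are: - Assignments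 behave as usual; selector access through $x$ needs $h_\sigma(x)\neq\mathtt{seg}$. - Asserts pass if they hold or a compared pointer is $\mathtt{seg}$. - $\mathtt{free}$ has no update. - Malloc returns a never-used address $a\notin\mathrm{adr}(h_\sigma)$, with $a.\mathtt{data}$ arbitrary and $a.\mathtt{next}_i\mapsto\mathtt{seg}$. Valid pointers. The set $\mathrm{valid}(\sigma)\subseteq\mathit{PExp}$ is all of $\mathit{PExp}$ initially. For each command: - malloc into $x$ adds $x$; - $\mathtt{free}(x)$ with $h_\sigma(x)=a\neq\mathtt{seg}$ removes all $e$ with $h_\sigma(e)=a$ and all $a.\mathtt{next}_i$; - $x:=y$ makes $x$ valid iff $y$ is valid; - $x.\mathtt{next}:=y$ with $h_\sigma(x)=a$ makes $a.\mathtt{next}$ valid iff $y$ is valid; - $y:=x.\mathtt{next}$ with $h_\sigma(x)=a$ makes $y$ valid iff $x$ and $a.\mathtt{next}$ are valid. Pointer race. A pointer race is an action executing $\mathtt{free}(x)$, reading/writing $x.\mathtt{next}$ or $x.\mathtt{data}$, or an assertion mentioning pointer variable $x$, with $x$ not valid before the action. A set is PRF if none of its computations has a prefix that is a pointer race. *)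

(* Defs.v *)
From Stdlib Require Import List Arith PeanoNat.
Import ListNotations.
Set Implicit Arguments.

Section Model.

Variable Dat : Type.

Definition pvar := nat.
Definition dvar := nat.
Definition adr  := nat.
Definition sel  := nat.   (* index i of the selector next_i *)

Inductive pval_t := Seg | Ad (a : adr).

Inductive pexp := PV (x : pvar) | PNext (a : adr) (i : sel).
Inductive dexp := DV (u : dvar) | DData (a : adr).

Definition pexp_eq_dec (e f : pexp) : {e = f} + {e <> f}.
Proof. decide equality; apply Nat.eq_dec. Defined.
Definition dexp_eq_dec (e f : dexp) : {e = f} + {e <> f}.
Proof. decide equality; apply Nat.eq_dec. Defined.

Inductive cond :=
| CPeq (x y : pvar)
| CDeq (u v : dvar)
| CNeg (c : cond).

Inductive cmd :=
| Assert (c : cond)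
| Malloc (x : pvar)
| Free (x : pvar)
| LoadNext (y x : pvar) (i : sel)
| StoreNext (x : pvar) (i : sel) (y : pvar)
| AsgnP (x y : pvar)
| LoadData (u : dvar) (x : pvar)
| StoreData (x : pvar) (u : dvar)
| Op (u : dvar) (op : list Dat -> Dat) (args : list dvar).

(* while-programs: sequential composition, nondeterministic choice,
   nondeterministic loop (Kleene star), primitive commands; branching is
   done with (complementary) assertions. *)
Inductive stmt :=
| SCmd (c : cmd)
| SSeq (s1 s2 : stmt)
| SChoice (s1 s2 : stmt)
| SStar (s : stmt).

(* a program is a (finite) set of threads *)
Definition program := list stmt.

(* next c k k' : from the thread continuation k the thread can execute
   the command c and then continues with k'. *)
Inductive next : cmd -> list stmt -> list stmt -> Prop :=
| next_cmd c k : next c (SCmd c :: k) k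
| next_seq c s1 s2 k k' : next c (s1 :: s2 :: k) k' -> next c (SSeq s1 s2 :: k) k'
| next_choiceL c s1 s2 k k' : next c (s1 :: k) k' -> next c (SChoice s1 s2 :: k) k'
| next_choiceR c s1 s2 k k' : next c (s2 :: k) k' -> next c (SChoice s1 s2 :: k) k'
| next_star_exit c s k k' : next c k k' -> next c (SStar s :: k) k'
| next_star_iter c s k k' : next c (s :: SStar s :: k) k' -> next c (SStar s :: k) k'.

Record heap := mkHeap {
  pval : pexp -> option pval_t;
  dval : dexp -> option Dat }.

Definition h_init : heap :=
  mkHeap (fun e => match e with PV _ => Some Seg | PNext _ _ => None end)
         (fun _ => None).

Definition adr_of (h : heap) (a : adr) : Prop :=
  (exists e, pval h e = Some (Ad a)) \/
  (exists i, pval h (PNext a i) <> None) \/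
  dval h (DData a) <> None.

Definition updP (h : heap) (e : pexp) (v : pval_t) : heap :=
  mkHeap (fun f => if pexp_eq_dec f e then Some v else pval h f) (dval h).
Definition updD (h : heap) (e : dexp) (d : Dat) : heap :=
  mkHeap (pval h) (fun f => if dexp_eq_dec f e then Some d else dval h f).

Fixpoint cond_pvars (c : cond) : list pvar :=
  match c with
  | CPeq x y => [x; y]
  | CDeq _ _ => []
  | CNeg c => cond_pvars c
  end.

Fixpoint cond_holds (h : heap) (c : cond) : Prop :=
  match c with
  | CPeq x y => pval h (PV x) = pval h (PV y)
  | CDeq u v => dval h (DV u) = dval h (DV v)
  | CNeg c => ~ cond_holds h c
  end.

Definition assert_passes (h : heap) (c : cond) : Prop :=
  cond_holds h c \/ exists x, In x (cond_pvars c) /\ pval h (PV x) = Some Seg.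

Fixpoint dvals (h : heap) (us : list dvar) : option (list Dat) :=
  match us with
  | [] => Some []
  | u :: us' => match dval h (DV u), dvals h us' with
                | Some d, Some ds => Some (d :: ds)
                | _, _ => None
                end
  end.

Inductive gcstep : heap -> cmd -> heap -> Prop :=
| gc_assert h c : assert_passes h c -> gcstep h (Assert c) h
| gc_malloc h x a d :
    ~ adr_of h a ->
    gcstep h (Malloc x)
      (mkHeap (fun f => match f with
                        | PV y => if Nat.eq_dec y x then Some (Ad a) else pval h f
                        | PNext b i => if Nat.eq_dec b a then Some Seg else pval h f
                        end)
              (fun f => if dexp_eq_dec f (DData a) then Some d else dval h f))
| gc_free h x : gcstep h (Free x) h
| gc_loadnext h y x i a v :
    pval h (PV x) = Some (Ad a) -> pval h (PNext a i) = Some v ->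
    gcstep h (LoadNext y x i) (updP h (PV y) v)
| gc_storenext h x i y a v :
    pval h (PV x) = Some (Ad a) -> pval h (PV y) = Some v ->
    gcstep h (StoreNext x i y) (updP h (PNext a i) v)
| gc_asgnp h x y v :
    pval h (PV y) = Some v -> gcstep h (AsgnP x y) (updP h (PV x) v)
| gc_loaddata h u x a d :
    pval h (PV x) = Some (Ad a) -> dval h (DData a) = Some d ->
    gcstep h (LoadData u x) (updD h (DV u) d)
| gc_storedata h x u a d :
    pval h (PV x) = Some (Ad a) -> dval h (DV u) = Some d ->
    gcstep h (StoreData x u) (updD h (DData a) d)
| gc_op h u op args ds :
    dvals h args = Some ds -> gcstep h (Op u op args) (updD h (DV u) (op ds)).

Record act := mkAct { tid : nat; com : cmd; post : heap }.

Definition heap_after (s : list act) : heap :=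
  fold_left (fun _ a => post a) s h_init.

Fixpoint set_nth {A} (l : list A) (n : nat) (v : A) : list A :=
  match l, n with
  | [], _ => []
  | _ :: l', 0 => v :: l'
  | x :: l', S n' => x :: set_nth l' n' v
  end.

Inductive reach (P : program) : list act -> list (list stmt) -> heap -> Prop :=
| reach_nil : reach P [] (map (fun s => [s]) P) h_init
| reach_step s ctl h t c k' h' :
    reach P s ctl h -> t < length ctl ->
    next c (nth t ctl []) k' -> gcstep h c h' ->
    reach P (s ++ [mkAct t c h']) (set_nth ctl t k') h'.

Definition sem_GC (P : program) : list act -> Prop :=
  fun s => exists ctl h, reach P s ctl h.

Definition valid_step (h : heap) (c : cmd) (V : pexp -> Prop) : pexp -> Prop :=
  match c with
  | Malloc x => fun e => e = PV x \/ V e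
  | Free x =>
      match pval h (PV x) with
      | Some (Ad a) => fun e => V e /\ pval h e <> Some (Ad a) /\
                                 (forall i, e <> PNext a i)
      | _ => V
      end
  | AsgnP x y => fun e => if pexp_eq_dec e (PV x) then V (PV y) else V e
  | StoreNext x i y =>
      match pval h (PV x) with
      | Some (Ad a) => fun e => if pexp_eq_dec e (PNext a i) then V (PV y) else V e
      | _ => V
      end
  | LoadNext y x i =>
      match pval h (PV x) with
      | Some (Ad a) => fun e => if pexp_eq_dec e (PV y)
                                then V (PV x) /\ V (PNext a i) else V e
      | _ => V
      end
  | _ => V
  end.

Fixpoint valid_from (h : heap) (V : pexp -> Prop) (s : list act) : pexp -> Prop :=
  match s with
  | [] => V
  | a :: s' => valid_from (post a) (valid_step h (com a) V) s'
  end.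

Definition valid (s : list act) : pexp -> Prop := valid_from h_init (fun _ => True) s.

Definition deref_vars (c : cmd) : list pvar :=
  match c with
  | Free x | LoadNext _ x _ | StoreNext x _ _ | LoadData _ x | StoreData x _ => [x]
  | Assert c => cond_pvars c
  | _ => []
  end.

Definition pointer_race (s : list act) (a : act) : Prop :=
  exists x, In x (deref_vars (com a)) /\ ~ valid s (PV x).

Definition PRF (S : list act -> Prop) : Prop :=
  forall t, S t -> forall s a u, t = s ++ a :: u -> ~ pointer_race s a.

End Model.

(* Main.v *)
Require Import Defs.
From Stdlib Require Import List Arith PeanoNat Lia Classical.
Import ListNotations.

Lemma valid_from_snoc {Dat} (s : list (act Dat)) : forall h V a,
  valid_from h V (s ++ [a]) = valid_step (fold_left (fun _ a => post a) s h) (com a) (valid_from h V s).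
Proof. induction s as [|a0 s IH]; intros; simpl; [reflexivity| apply IH]. Qed.

Lemma valid_snoc {Dat} (s : list (act Dat)) a : valid (s ++ [a]) = valid_step (heap_after s) (com a) (valid s).
Proof. unfold valid, heap_after. apply valid_from_snoc. Qed.

Lemma heap_after_snoc {Dat} (s : list (act Dat)) a : heap_after (s ++ [a]) = post a.
Proof. unfold heap_after. rewrite fold_left_app. reflexivity. Qed.

Lemma reach_heap {Dat} {P : program Dat} {s ctl h} : reach P s ctl h -> heap_after s = h.
Proof. induction 1. reflexivity. rewrite heap_after_snoc. reflexivity. Qed.

Lemma reach_prefix {Dat} {P : program Dat} {t ctl h} : reach P t ctl h ->
  forall s u, t = s ++ u -> exists ctl' h', reach P s ctl' h'.
Proof.
  induction 1 as [|t0 ctl h tt c k' h' Hr IH Ht Hn Hs]; intros s u Heq.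
  - symmetry in Heq. apply app_eq_nil in Heq. destruct Heq; subst. eexists _, _; constructor.
  - induction u as [|z u' _] using rev_ind.
    + rewrite app_nil_r in Heq; subst. eexists _, _; econstructor; eauto.
    + rewrite app_assoc in Heq. apply app_inj_tail in Heq as [H1 H2]. eapply IH; eauto.
Qed.

Definition freed {Dat} (s : list (act Dat)) (b : adr) : Prop :=
  exists s1 a1 s2 x, s = s1 ++ a1 :: s2 /\ com a1 = Free Dat x /\ pval (heap_after s1) (PV x) = Some (Ad b).

Lemma freed_mono {Dat} (s : list (act Dat)) a b : freed s b -> freed (s ++ [a]) b.
Proof. intros (s1 & a1 & s2 & x & -> & H1 & H2). exists s1, a1, (s2 ++ [a]), x.
  rewrite <- app_assoc. simpl. auto. Qed.

Lemma freed_snoc {Dat} {s : list (act Dat)} {a b} : freed (s ++ [a]) b ->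
  freed s b \/ (exists x, com a = Free Dat x /\ pval (heap_after s) (PV x) = Some (Ad b)).
Proof.
  intros (s1&a1&s2&x&Heq&H1&H2).
  induction s2 as [|z s2' _] using rev_ind.
  - apply app_inj_tail in Heq as [-> ->]. right; eauto.
  - rewrite app_comm_cons, app_assoc in Heq. apply app_inj_tail in Heq as [-> ->].
    left. exists s1, a1, s2', x. auto.
Qed.

Lemma freed_nil {Dat} {b} : ~ freed (@nil (act Dat)) b.
Proof. intros (s1&a1&s2&x&Heq&_). destruct s1; discriminate. Qed.

Lemma dval_mono {Dat} {h h' : heap Dat} {c b} : gcstep h c h' -> dval h (DData b) <> None -> dval h' (DData b) <> None.
Proof.
  intros Hs Hd; inversion Hs; subst; unfold updD, updP; cbn [pval dval]; auto;
  repeat match goal with |- context [dexp_eq_dec ?x ?y] => destruct (dexp_eq_dec x y) end; congruence.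
Qed.

Lemma inv_I {Dat} {P : program Dat} {s ctl h} : reach P s ctl h ->
  (forall e b, pval h e = Some (Ad b) -> dval h (DData b) <> None) /\
  (forall b, freed s b -> dval h (DData b) <> None).
Proof.
  induction 1 as [|s ctl h t c k' h' Hr [I1 I2] Ht Hn Hs].
  - split.
    + intros [x|a i] b H; simpl in H; discriminate.
    + intros b Hf. exfalso; exact (freed_nil Hf).
  - pose proof (reach_heap Hr) as Hh.
    split.
    + intros e b He. inversion Hs; subst; unfold updD, updP in *; cbn [pval dval] in *.
      all: try (exact (dval_mono Hs (I1 _ _ He))).
      * destruct e as [y|b' i]; cbn [pval dval] in He.
        -- destruct (Nat.eq_dec y x).
           ++ inversion He; subst. destruct (dexp_eq_dec (DData b) (DData b)); congruence.
           ++ exact (dval_mono Hs (I1 _ _ He)).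
        -- destruct (Nat.eq_dec b' a). discriminate.
           exact (dval_mono Hs (I1 _ _ He)).
      * destruct (pexp_eq_dec e (PV y)); [inversion He; subst; eapply I1; eassumption| eapply I1; eassumption].
      * destruct (pexp_eq_dec e (PNext a i)); [inversion He; subst; eapply I1; eassumption| eapply I1; eassumption].
      * destruct (pexp_eq_dec e (PV x)); [inversion He; subst; eapply I1; eassumption| eapply I1; eassumption].
    + intros b Hf. destruct (freed_snoc Hf) as [Hf'|(x&Hc&Hx)].
      * eapply dval_mono; eauto.
      * simpl in Hc; subst c. inversion Hs; subst. eapply I1; eauto.
Qed.
Lemma valid_free_sub {Dat} (h : heap Dat) x (V : pexp -> Prop) e : valid_step h (Free Dat x) V e -> V e.
Proof. simpl. destruct (pval h (PV x)) as [[|a]|]; tauto. Qed.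

Lemma inv_K {Dat} {P : program Dat} {s ctl h} : reach P s ctl h ->
  forall b e, freed s b -> pval h e = Some (Ad b) -> ~ valid s e.
Proof.
  induction 1 as [|s ctl h t c k' h' Hr IH Ht Hn Hs].
  - intros b e Hf. exfalso; exact (freed_nil Hf).
  - pose proof (reach_heap Hr) as Hh. pose proof (inv_I Hr) as [I1 I2].
    intros b e Hf He. rewrite valid_snoc, Hh. cbn [com].
    destruct (freed_snoc Hf) as [Hf'|(x&Hc&Hx)].
    + inversion Hs; subst; unfold updD, updP in *; cbn [pval dval] in *.
      * exact (IH b e Hf' He).
      * destruct e as [y|b' i]; cbn [pval] in He.
        -- destruct (Nat.eq_dec y x).
           ++ inversion He; subst. exfalso. match goal with H : ~ adr_of _ _ |- _ => apply H end.
              right; right. apply I2; auto.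
           ++ cbn. intros [Heq|Hv]; [congruence| exact (IH _ _ Hf' He Hv)].
        -- destruct (Nat.eq_dec b' a). discriminate.
           cbn. intros [Heq|Hv]; [congruence| exact (IH _ _ Hf' He Hv)].
      * intros Hv. apply valid_free_sub in Hv. exact (IH _ _ Hf' He Hv).
      * cbn [valid_step]. match goal with H : pval _ (PV x) = Some (Ad _) |- _ => rewrite H end.
        destruct (pexp_eq_dec e (PV y)).
        -- inversion He; subst. intros [_ Hv]. eapply IH; eauto.
        -- exact (IH _ _ Hf' He).
      * cbn [valid_step]. match goal with H : pval _ (PV x) = Some (Ad _) |- _ => rewrite H end.
        destruct (pexp_eq_dec e (PNext a i)).
        -- inversion He; subst. eapply IH; eauto.
        -- exact (IH _ _ Hf' He).
      * cbn [valid_step]. destruct (pexp_eq_dec e (PV x)).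
        -- inversion He; subst. eapply IH; eauto.
        -- exact (IH _ _ Hf' He).
      * exact (IH _ _ Hf' He).
      * exact (IH _ _ Hf' He).
      * exact (IH _ _ Hf' He).
    + cbn [com] in Hc; subst c. inversion Hs; subst. cbn [valid_step]. rewrite Hx.
      intros (_&Hne&_). congruence.
Qed.
Definition rf {Dat} (s : list (act Dat)) : Prop :=
  forall s0 a u, s = s0 ++ a :: u -> ~ pointer_race s0 a.

Definition Jprop {Dat} (s : list (act Dat)) (h : heap Dat) e : Prop :=
  (exists b i, e = PNext b i /\ freed s b) \/ (exists b, pval h e = Some (Ad b) /\ freed s b).

Lemma J_old {Dat} (s : list (act Dat)) h h' a e : Jprop s h e -> pval h' e = pval h e -> Jprop (s ++ [a]) h' e.
Proof.
  intros [(b&i&->&Hf)|(b&Hp&Hf)] Heq.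
  - left. exists b, i. split; auto. apply freed_mono; auto.
  - right. exists b. split; [congruence| apply freed_mono; auto].
Qed.

Lemma freed_new {Dat} (s : list (act Dat)) a x b : com a = Free Dat x ->
  pval (heap_after s) (PV x) = Some (Ad b) -> freed (s ++ [a]) b.
Proof. intros H1 H2. exists s, a, [], x. auto. Qed.

Lemma inv_J {Dat} {P : program Dat} {s ctl h} : reach P s ctl h -> rf s ->
  forall e, ~ valid s e -> Jprop s h e.
Proof.
  induction 1 as [|s ctl h t c k' h' Hr IH Ht Hn Hs]; intros Hrf.
  - intros e Hv. exfalso. apply Hv. exact I.
  - pose proof (reach_heap Hr) as Hh. pose proof (inv_I Hr) as [I1 I2].
    pose proof (inv_K Hr) as K.
    assert (Hrf' : rf s).
    { intros s0 a u -> . apply (Hrf s0 a (u ++ [mkAct t c h'])). rewrite <- app_assoc. reflexivity. }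
    specialize (IH Hrf').
    assert (Hnr : forall y, In y (deref_vars c) -> valid s (PV y)).
    { intros y Hy. apply NNPP. intro N. apply (Hrf s (mkAct t c h') []); [reflexivity|].
      exists y. split; assumption. }
    clear Hrf Hrf'.
    intros e Hv. rewrite valid_snoc, Hh in Hv. cbn [com] in Hv.
    inversion Hs; subst; unfold updD, updP in *; cbn [valid_step] in Hv.
    + eapply J_old; [exact (IH _ Hv)| reflexivity].
    + destruct (IH e (fun H => Hv (or_intror H))) as [(b&i&->&Hf)|(b&Hp&Hf)].
      * destruct (Nat.eq_dec b a) as [->|Hne].
        -- exfalso. match goal with H : ~ adr_of _ _ |- _ => apply H end. right; right; apply I2; auto.
        -- left. exists b, i. split; auto. apply freed_mono; auto.
      * right. exists b. split; [|apply freed_mono; auto].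
        destruct e as [y|b' i]; cbn [pval].
        -- destruct (Nat.eq_dec y x); [subst; exfalso; apply Hv; left; reflexivity| exact Hp].
        -- destruct (Nat.eq_dec b' a); [subst|exact Hp].
           exfalso. match goal with H : ~ adr_of _ _ |- _ => apply H end. right; left. exists i. congruence.
    + destruct (pval (heap_after s) (PV x)) as [[|a]|] eqn:Hx.
      * eapply J_old; [exact (IH _ Hv)| reflexivity].
      * destruct (classic (valid s e)) as [V|NV]; [|eapply J_old; [exact (IH _ NV)| reflexivity]].
        destruct (classic (pval (heap_after s) e = Some (Ad a))) as [E|NE].
        -- right. exists a. split; auto. eapply freed_new; [reflexivity| exact Hx].
        -- destruct (classic (exists i, e = PNext a i)) as [(i&->)|NEi].
           ++ left. exists a, i. split; auto. eapply freed_new; [reflexivity| exact Hx].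
           ++ exfalso. apply Hv. split; [exact V| split; [exact NE|]]. intros i Ei. apply NEi; eauto.
      * eapply J_old; [exact (IH _ Hv)| reflexivity].
    + assert (Vx : valid s (PV x)) by (apply Hnr; cbn; auto).
      match goal with H : pval _ (PV x) = Some (Ad _) |- _ => rewrite H in Hv; rename H into Hxa end.
      destruct (pexp_eq_dec e (PV y)) as [->|Hne].
      * assert (Hni : ~ valid s (PNext a i)) by tauto.
        destruct (IH _ Hni) as [(b&i'&Heq&Hf)|(b&Hp&Hf)].
        -- inversion Heq; subst. exfalso. exact (K _ _ Hf Hxa Vx).
        -- right. exists b. split; [|apply freed_mono; auto].
           cbn [pval]. destruct (pexp_eq_dec (PV y) (PV y)); [congruence| contradiction].
      * eapply J_old; [exact (IH _ Hv)|]. cbn [pval]. destruct (pexp_eq_dec e (PV y)); [contradiction| reflexivity].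
    + match goal with H : pval _ (PV x) = Some (Ad _) |- _ => rewrite H in Hv end.
      destruct (pexp_eq_dec e (PNext a i)) as [->|Hne].
      * destruct (IH _ Hv) as [(b&i'&Heq&Hf)|(b&Hp&Hf)]; [discriminate|].
        right. exists b. split; [|apply freed_mono; auto].
        cbn [pval]. destruct (pexp_eq_dec (PNext a i) (PNext a i)); [congruence| contradiction].
      * eapply J_old; [exact (IH _ Hv)|]. cbn [pval]. destruct (pexp_eq_dec e (PNext a i)); [contradiction| reflexivity].
    + destruct (pexp_eq_dec e (PV x)) as [->|Hne].
      * destruct (IH _ Hv) as [(b&i'&Heq&Hf)|(b&Hp&Hf)]; [discriminate|].
        right. exists b. split; [|apply freed_mono; auto].
        cbn [pval]. destruct (pexp_eq_dec (PV x) (PV x)); [congruence| contradiction].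
      * eapply J_old; [exact (IH _ Hv)|]. cbn [pval]. destruct (pexp_eq_dec e (PV x)); [contradiction| reflexivity].
    + eapply J_old; [exact (IH _ Hv)| reflexivity].
    + eapply J_old; [exact (IH _ Hv)| reflexivity].
    + eapply J_old; [exact (IH _ Hv)| reflexivity].
Qed.
Definition pattern {Dat} (P : program Dat) : Prop :=
  exists (s1 : list (act Dat)) (a1 : act Dat) (s2 : list (act Dat)) (a2 : act Dat)
            (x y : pvar) (a : adr),
       sem_GC P (s1 ++ a1 :: s2 ++ [a2]) /\
       com a1 = @Free Dat x /\
       pval (heap_after s1) (PV x) = Some (Ad a) /\
       In y (deref_vars (com a2)) /\
       pval (heap_after (s1 ++ a1 :: s2)) (PV y) = Some (Ad a).

Lemma earliest {Dat} (P : program Dat) n : forall s a u, length s < n ->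
  sem_GC P (s ++ a :: u) -> pointer_race s a -> pattern P.
Proof.
  induction n as [|n IHn]; intros s a u Hl Hsem Hrace; [inversion Hl|].
  destruct Hsem as (ctl & h & Hr).
  destruct (classic (rf s)) as [Hrf|Hnrf].
  - destruct (reach_prefix Hr s (a :: u) eq_refl) as (ctl' & h' & Hr').
    destruct Hrace as (y & Hy & Hnv).
    destruct (inv_J Hr' Hrf _ Hnv) as [(b&i&Heq&_)|(b&Hp&Hf)]; [discriminate|].
    destruct Hf as (s1 & a1 & s2 & x & Hs & Hc & Hx).
    exists s1, a1, s2, a, x, y, b. repeat split; auto.
    + destruct (reach_prefix Hr (s ++ [a]) u) as (c2 & h2 & Hr2).
      { rewrite <- app_assoc. reflexivity. }
      exists c2, h2. subst s. rewrite <- app_assoc in Hr2. exact Hr2.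
    + rewrite <- Hs. rewrite (reach_heap Hr'). exact Hp.
  - unfold rf in Hnrf.
    apply not_all_ex_not in Hnrf as [s0 Hnrf].
    apply not_all_ex_not in Hnrf as [a0 Hnrf].
    apply not_all_ex_not in Hnrf as [u0 Hnrf].
    apply imply_to_and in Hnrf as [Hs0 Hr0]. apply NNPP in Hr0.
    apply (IHn s0 a0 (u0 ++ a :: u)).
    + subst s. rewrite length_app in Hl. cbn in Hl. lia.
    + exists ctl, h. subst s. rewrite <- app_assoc in Hr. exact Hr.
    + exact Hr0.
Qed.

Theorem mainTheorem8 (Dat : Type) (P : program Dat) :
  PRF (sem_GC P) <->
  ~ (exists (s1 : list (act Dat)) (a1 : act Dat) (s2 : list (act Dat)) (a2 : act Dat)
            (x y : pvar) (a : adr),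
       sem_GC P (s1 ++ a1 :: s2 ++ [a2]) /\
       com a1 = @Free Dat x /\
       pval (heap_after s1) (PV x) = Some (Ad a) /\
       In y (deref_vars (com a2)) /\
       pval (heap_after (s1 ++ a1 :: s2)) (PV y) = Some (Ad a)).
Proof.
  split.
  - intros HPRF (s1&a1&s2&a2&x&y&a&Hsem&Hc&Hx&Hy&Hya).
    destruct Hsem as (ctl & h & Hr).
    destruct (reach_prefix Hr (s1 ++ a1 :: s2) [a2]) as (ctl' & h' & Hr').
    { rewrite <- app_assoc. reflexivity. }
    assert (Hf : freed (s1 ++ a1 :: s2) a) by (exists s1, a1, s2, x; auto).
    rewrite (reach_heap Hr') in Hya.
    apply (HPRF _ (ex_intro _ ctl (ex_intro _ h Hr)) (s1 ++ a1 :: s2) a2 []).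
    + rewrite <- app_assoc. reflexivity.
    + exists y. split; [exact Hy| exact (inv_K Hr' _ _ Hf Hya)].
  - intros Hno t Ht s a u Heq Hrace. apply Hno.
    subst t. exact (earliest P (S (length s)) s a u (Nat.lt_succ_diag_r _) Ht Hrace).
Qed.
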